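(* Let $H=\bigcup_{j=1}^n(c_j,d_j)\subset\mathbb R$ with pairwise disjoint closed intervals $[c_j,d_j]$, let $\mathcal B$ be finite and $m\ge2$. Assume for each $\beta\in\mathcal B$: $b_\beta,\theta_\beta\in C^m(\bar H)$, $b_\beta>0$ on $\bar H$, $\theta_\beta(H)\subset H$; and there exist $\mu\ge1$ and $\kappa<1$ with $|\theta_\omega(x)-\theta_\omega(y)|\le\kappa|x-y|$ for all $\omega\in\mathcal B_\mu$, $x,y\in\bar H$. Let $C_1=\sup\{|Db_\beta(x)|/b_\beta(x):\beta\in\mathcal B,x\in H\}$, $C_2=\sup\{|D^2b_\beta(x)|/b_\beta(x):\beta\in\mathcal B,x\in H\}$, $M_0=\sup\{|D^2\theta_\beta(x)|:\beta\in\mathcal B,x\in\bar H\}$, $\epsilon_0=1$ and $\epsilon_\nu=\sup\{|\theta_\omega(x)-\theta_\omega(y)|/|x-y|:\omega\in\mathcal B_\nu,x,y\in H,x\neq y\}$ for $\nu\ge1$. Then for $s>0$, every $\nu\ge1$, every $\omega\in\mathcal B_\nu$ and $x\in\bar H$, $$\frac{D^2(b_\omega(x)^s)}{b_\omega(x)^s}\le s^2C_1^2\Big(\sum_{k=0}^\infty\epsilon_k\Big)^2+s\Big(\sum_{k=0}^\infty\epsilon_k^2\Big)\Big[C_2+C_1M_0\sum_{k=0}^\infty\epsilon_k\Big]$$ and $$\frac{D^2(b_\omega(x)^s)}{b_\omega(x)^s}\ge -s\Big(\sum_{k=0}^\infty\epsilon_k^2\Big)\Big[C_1^2+C_2+C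_1M_0\sum_{k=0}^\infty\epsilon_k\Big].$$
   Context: $D=d/dx$. $\mathcal B_\nu=\{(j_1,\ldots,j_\nu):j_k\in\mathcal B\}$; for $\omega=(j_1,\ldots,j_\nu)$, $\theta_\omega=\theta_{j_\nu}\circ\cdots\circ\theta_{j_1}$ and $b_\omega(x)=b_{j_\nu}(\theta_{(j_1,\ldots,j_{\nu-1})}(x))\cdots b_{j_2}(\theta_{j_1}(x))\,b_{j_1}(x)$. $C^m(\bar H)$ denotes real $C^m$ functions on $H$ whose derivatives of order $\le m$ extend continuously to $\bar H$. *)

(* Defs.v *)
From Stdlib Require Import Reals Lra List.
From Coquelicot Require Import Coquelicot.
Open Scope R_scope.

Definition Hset (n : nat) (c d : nat -> R) (x : R) : Prop :=
  exists j, (j < n)%nat /\ c j < x < d j.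

Definition Hbar (n : nat) (c d : nat -> R) (x : R) : Prop :=
  exists j, (j < n)%nat /\ c j <= x <= d j.

Definition cont_within (A : R -> Prop) (g : R -> R) (x : R) : Prop :=
  filterlim g (within A (locally x)) (locally (g x)).

Definition cont_ext (A Abar : R -> Prop) (h g : R -> R) : Prop :=
  (forall x, A x -> g x = h x) /\ (forall x, Abar x -> cont_within Abar g x).

Definition Cm_bar (m : nat) (A Abar : R -> Prop) (f : R -> R) : Prop :=
  (forall x, A x -> forall k, (k <= m)%nat -> ex_derive_n f k x) /\
  (forall x, Abar x -> cont_within Abar f x) /\
  (forall k, (k <= m)%nat -> exists g, cont_ext A Abar (Derive_n f k) g).

(* words omega = (j_1,...,j_nu) in B_nu, with B = {0,...,p-1} *)
Definition word (p nu : nat) (w : list nat) : Prop :=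
  length w = nu /\ List.Forall (fun j => (j < p)%nat) w.

(* theta_omega = theta_{j_nu} o ... o theta_{j_1} *)
Fixpoint theta_w (theta : nat -> R -> R) (w : list nat) (x : R) : R :=
  match w with
  | nil => x
  | j :: w' => theta_w theta w' (theta j x)
  end.

(* b_omega(x) = b_{j_nu}(theta_{(j_1..j_{nu-1})} x) ... b_{j_2}(theta_{j_1} x) b_{j_1}(x) *)
Fixpoint b_w (b theta : nat -> R -> R) (w : list nat) (x : R) : R :=
  match w with
  | nil => 1
  | j :: w' => b_w b theta w' (theta j x) * b j x
  end.

Definition supR (P : R -> Prop) : R := real (Lub_Rbar P).

Definition Cb1 (p n : nat) (c d : nat -> R) (b : nat -> R -> R) : R :=
  supR (fun r => exists j x, (j < p)%nat /\ Hset n c d x /\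
          r = Rabs (Derive (b j) x) / b j x).

Definition Cb2 (p n : nat) (c d : nat -> R) (b : nat -> R -> R) : R :=
  supR (fun r => exists j x, (j < p)%nat /\ Hset n c d x /\
          r = Rabs (Derive_n (b j) 2 x) / b j x).

(* sup over beta and x in Hbar of |D^2 theta_beta(x)|, D^2 theta_beta on Hbar being
   the continuous extension of D^2 theta_beta from H *)
Definition Mth0 (p n : nat) (c d : nat -> R) (theta : nat -> R -> R) : R :=
  supR (fun r => exists j x g, (j < p)%nat /\ Hbar n c d x /\
          cont_ext (Hset n c d) (Hbar n c d) (Derive_n (theta j) 2) g /\
          r = Rabs (g x)).

Definition eps (p n : nat) (c d : nat -> R) (theta : nat -> R -> R) (nu : nat) : R :=
  match nu with
  | O => 1
  | S _ => supR (fun r => exists w x y, word p nu w /\ Hset n c d x /\ Hset n c d y /\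
             x <> y /\ r = Rabs (theta_w theta w x - theta_w theta w y) / Rabs (x - y))
  end.

(* Main.v *)
Require Import Defs.
From Stdlib Require Import Reals Lra Lia List Classical.
From Coquelicot Require Import Coquelicot.
Open Scope R_scope.

Lemma ballR (x e y : R) : ball x e y <-> Rabs (y - x) < e.
Proof. unfold ball; simpl; unfold AbsRing_ball, abs, minus, plus, opp; simpl. tauto. Qed.

Definition ctw (A : R -> Prop) (g : R -> R) (x : R) : Prop :=
  forall e, 0 < e -> exists del, 0 < del /\ forall z, A z -> Rabs (z - x) < del -> Rabs (g z - g x) < e.

Lemma cont_within_ctw A g x : cont_within A g x -> ctw A g x.
Proof.
  intros Hc e He.
  assert (HF := Hc (ball (g x) (mkposreal e He)) (locally_ball _ _)).
  destruct HF as [[del Hdel] HP].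
  exists del; split; auto. intros z Az Hz.
  apply ballR. apply HP; auto.
Qed.

Lemma supR_ub (E : R -> Prop) M r : (forall r, E r -> r <= M) -> E r -> r <= supR E.
Proof.
  intros HM Er. unfold supR. destruct (Lub_Rbar_correct E) as [Hub Hlub].
  assert (H1 := Hub r Er). assert (H2 : Rbar_le (Lub_Rbar E) M).
  { apply Hlub. intros y Ey. simpl. apply HM; auto. }
  destruct (Lub_Rbar E); simpl in *; try contradiction; auto.
Qed.

Lemma supR_le (E : R -> Prop) K : (forall r, E r -> r <= K) -> 0 <= K -> supR E <= K.
Proof.
  intros HK HK0. unfold supR. destruct (Lub_Rbar_correct E) as [Hub Hlub].
  assert (H2 : Rbar_le (Lub_Rbar E) K).
  { apply Hlub. intros y Ey. simpl. apply HK; auto. }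
  destruct (Lub_Rbar E); simpl in *; try contradiction; auto.
Qed.

Lemma supR_nonneg (E : R -> Prop) : (forall r, E r -> 0 <= r) -> 0 <= supR E.
Proof.
  intros H0. unfold supR. destruct (Lub_Rbar_correct E) as [Hub Hlub].
  destruct (Lub_Rbar E) eqn:HL; simpl; try lra.
  destruct (classic (exists r, E r)) as [[r0 Er]|Hne].
  - specialize (Hub r0 Er). simpl in Hub. specialize (H0 r0 Er). lra.
  - assert (Rbar_le (Finite r) m_infty).
    { apply Hlub. intros y Ey. exfalso; apply Hne; eauto. }
    simpl in H. contradiction.
Qed.

Lemma fin_bound n (Q : nat -> R -> Prop) :
  (forall i M M', M <= M' -> Q i M -> Q i M') ->
  (forall i, (i < n)%nat -> exists M, Q i M) -> exists M, forall i, (i < n)%nat -> Q i M.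
Proof.
  intros Hmon. induction n as [|n IH]; intros Hex.
  - exists 0. intros i Hi. lia.
  - destruct IH as [M1 HM1]. { intros i Hi. apply Hex. lia. }
    destruct (Hex n ltac:(lia)) as [M2 HM2].
    exists (Rmax M1 M2). intros i Hi.
    destruct (Nat.eq_dec i n) as [->|Hne].
    + apply Hmon with M2; auto. apply Rmax_r.
    + apply Hmon with M1; [apply Rmax_l|]. apply HM1. lia.
Qed.

Lemma fin_pos n (Q : nat -> R -> Prop) :
  (forall i m m', 0 < m' <= m -> Q i m -> Q i m') ->
  (forall i, (i < n)%nat -> exists m, 0 < m /\ Q i m) ->
  exists m, 0 < m /\ forall i, (i < n)%nat -> Q i m.
Proof.
  intros Hmon. induction n as [|n IH]; intros Hex.
  - exists 1. split; [lra|]. intros i Hi. lia.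
  - destruct IH as [m1 [Hm1 HM1]]. { intros i Hi. apply Hex. lia. }
    destruct (Hex n ltac:(lia)) as [m2 [Hm2 HM2]].
    exists (Rmin m1 m2). split. { apply Rmin_glb_lt; auto. }
    intros i Hi.
    destruct (Nat.eq_dec i n) as [->|Hne].
    + apply Hmon with m2; auto. split; [apply Rmin_glb_lt; auto|apply Rmin_r].
    + apply Hmon with m1; [split; [apply Rmin_glb_lt; auto|apply Rmin_l]|]. apply HM1. lia.
Qed.

Section Hs.
Variables (n : nat) (c d : nat -> R).
Hypothesis Hcd : forall j, (j < n)%nat -> c j < d j.

Lemma H_sub x : Hset n c d x -> Hbar n c d x.
Proof. intros [j [Hj Hx]]. exists j. split; auto; lra. Qed.

Lemma H_open x : Hset n c d x -> exists del, 0 < del /\ forall z, Rabs (z - x) < del -> Hset n c d z.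
Proof.
  intros [j [Hj Hx]]. exists (Rmin (x - c j) (d j - x)). split.
  - apply Rmin_glb_lt; lra.
  - intros z Hz. exists j. split; auto.
    assert (H1 := Rmin_l (x - c j) (d j - x)). assert (H2 := Rmin_r (x - c j) (d j - x)).
    apply Rabs_def2 in Hz. lra.
Qed.

Lemma H_locally x : Hset n c d x -> locally x (Hset n c d).
Proof.
  intros Hx. destruct (H_open x Hx) as [del [Hdel HP]].
  exists (mkposreal del Hdel). intros y Hy. apply HP. apply ballR in Hy. exact Hy.
Qed.

Lemma Hbar_approx x eta : Hbar n c d x -> 0 < eta -> exists z, Hset n c d z /\ Rabs (z - x) < eta.
Proof.
  intros [j [Hj Hx]] Heta. specialize (Hcd j Hj).
  set (t := Rmin 1 (eta / (d j - c j))).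
  assert (Ht1 : t <= 1) by apply Rmin_l.
  assert (Ht2 : t <= eta / (d j - c j)) by apply Rmin_r.
  assert (Ht0 : 0 < t). { apply Rmin_glb_lt; [lra|]. apply Rdiv_lt_0_compat; lra. }
  assert (Ht3 : t * (d j - c j) <= eta).
  { apply Rmult_le_compat_r with (r := d j - c j) in Ht2; [|lra].
    unfold Rdiv in Ht2. rewrite Rmult_assoc, Rinv_l in Ht2; lra. }
  exists (x + t * ((c j + d j)/2 - x)). split.
  - exists j. split; auto. split; nra.
  - replace (x + t * ((c j + d j) / 2 - x) - x) with (t * ((c j + d j) / 2 - x)) by ring.
    rewrite Rabs_mult, Rabs_right by lra.
    assert (Rabs ((c j + d j) / 2 - x) <= (d j - c j)/2) by (apply Rabs_le; lra).
    nra.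
Qed.

Lemma closure_le h x K : ctw (Hbar n c d) h x -> Hbar n c d x ->
  (forall z, Hset n c d z -> h z <= K) -> h x <= K.
Proof.
  intros Hc Hx HK. destruct (Rle_or_lt (h x) K) as [|Hlt]; auto.
  destruct (Hc (h x - K) ltac:(lra)) as [del [Hdel HP]].
  destruct (Hbar_approx x del Hx Hdel) as [z [Hz Hzx]].
  specialize (HP z (H_sub z Hz) Hzx). specialize (HK z Hz).
  apply Rabs_def2 in HP. lra.
Qed.

Lemma closure_abs h x K : ctw (Hbar n c d) h x -> Hbar n c d x ->
  (forall z, Hset n c d z -> Rabs (h z) <= K) -> Rabs (h x) <= K.
Proof.
  intros Hc Hx HK. destruct (Rle_or_lt (Rabs (h x)) K) as [|Hlt]; auto.
  destruct (Hc (Rabs (h x) - K) ltac:(lra)) as [del [Hdel HP]].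
  destruct (Hbar_approx x del Hx Hdel) as [z [Hz Hzx]].
  specialize (HP z (H_sub z Hz) Hzx). specialize (HK z Hz).
  assert (Rabs (h x) <= Rabs (h z) + Rabs (h z - h x)).
  { replace (h x) with (h z - (h z - h x)) at 1 by ring. 
    eapply Rle_trans; [apply Rabs_triang|]. rewrite Rabs_Ropp. lra. }
  lra.
Qed.

Lemma Hbar_closed y : ~ Hbar n c d y -> exists del, 0 < del /\ forall z, Rabs (z - y) < del -> ~ Hbar n c d z.
Proof.
  intros Hy.
  destruct (fin_pos n (fun i m => forall z, Rabs (z - y) < m -> ~ (c i <= z <= d i))) as [m [Hm HP]].
  - intros i m m' Hmm HQ z Hz. apply HQ. lra.
  - intros i Hi. assert (~ (c i <= y <= d i)) by (intro; apply Hy; exists i; auto).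
    destruct (Rlt_or_le y (c i)).
    + exists (c i - y). split; [lra|]. intros z Hz. apply Rabs_def2 in Hz. lra.
    + assert (d i < y) by lra. exists (y - d i). split; [lra|]. intros z Hz. apply Rabs_def2 in Hz. lra.
  - exists m. split; auto. intros z Hz [i [Hi Hzi]]. exact (HP i Hi z Hz Hzi).
Qed.

Lemma maps_Hbar th : (forall x, Hbar n c d x -> ctw (Hbar n c d) th x) ->
  (forall x, Hset n c d x -> Hset n c d (th x)) -> forall x, Hbar n c d x -> Hbar n c d (th x).
Proof.
  intros Hc HH x Hx. apply NNPP. intro Hn.
  destruct (Hbar_closed _ Hn) as [del [Hdel HP]].
  destruct (Hc x Hx del Hdel) as [del2 [Hdel2 HP2]].
  destruct (Hbar_approx x del2 Hx Hdel2) as [z [Hz Hzx]].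
  apply (HP (th z)). { rewrite <- Rabs_Ropp. replace (- (th z - th x)) with (th x - th z) by ring.
  rewrite Rabs_minus_sym. apply HP2; auto. apply H_sub; auto. }
  apply H_sub; auto.
Qed.

End Hs.

Lemma clamp_in a b z : a <= b -> a <= Rmax a (Rmin b z) <= b.
Proof. intros. unfold Rmax, Rmin. repeat destruct Rle_dec; lra. Qed.

Lemma clamp_dist a b z x : a <= x <= b -> Rabs (Rmax a (Rmin b z) - x) <= Rabs (z - x).
Proof.
  intros Hx. unfold Rmax, Rmin. repeat destruct Rle_dec as [?|?%Rnot_le_lt];
  repeat match goal with |- context [Rabs ?u] => destruct (Rcase_abs u) as [?|?];
    [rewrite (Rabs_left u) by lra | rewrite (Rabs_right u) by lra] end; lra.
Qed.

Lemma clamp_id a b x : a <= x <= b -> Rmax a (Rmin b x) = x.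
Proof. intros. unfold Rmax, Rmin. repeat destruct Rle_dec; lra. Qed.

Lemma clamp_cont a b g : a <= b -> (forall x, a <= x <= b -> ctw (fun z => a <= z <= b) g x) ->
  forall x, a <= x <= b -> continuity_pt (fun z => g (Rmax a (Rmin b z))) x.
Proof.
  intros Hab Hc x Hx. unfold continuity_pt, continue_in, limit1_in, limit_in.
  intros eps Heps. destruct (Hc x Hx eps Heps) as [del [Hdel HP]].
  exists del. split; auto. intros z [_ Hz]. simpl in *. unfold R_dist in *.
  rewrite (clamp_id a b x Hx). apply HP. apply clamp_in; auto.
  eapply Rle_lt_trans; [apply clamp_dist; auto|]. exact Hz.
Qed.

Lemma bdd_interval a b g : a <= b -> (forall x, a <= x <= b -> ctw (fun z => a <= z <= b) g x) ->
  exists M, forall x, a <= x <= b -> Rabs (g x) <= M.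
Proof.
  intros Hab Hc. assert (HC := clamp_cont a b g Hab Hc).
  destruct (continuity_ab_maj _ a b Hab HC) as [Mx [HMx _]].
  destruct (continuity_ab_min _ a b Hab HC) as [mx [Hmx _]].
  exists (Rmax (g (Rmax a (Rmin b Mx))) (- g (Rmax a (Rmin b mx)))).
  intros x Hx. specialize (HMx x Hx). specialize (Hmx x Hx). rewrite (clamp_id a b x Hx) in HMx, Hmx.
  apply Rabs_le. split.
  - assert (H := Rmax_r (g (Rmax a (Rmin b Mx))) (- g (Rmax a (Rmin b mx)))). lra.
  - assert (H := Rmax_l (g (Rmax a (Rmin b Mx))) (- g (Rmax a (Rmin b mx)))). lra.
Qed.

Lemma pos_interval a b g : a <= b -> (forall x, a <= x <= b -> ctw (fun z => a <= z <= b) g x) ->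
  (forall x, a <= x <= b -> 0 < g x) ->
  exists m, 0 < m /\ forall x, a <= x <= b -> m <= g x.
Proof.
  intros Hab Hc Hpos. assert (HC := clamp_cont a b g Hab Hc).
  destruct (continuity_ab_min _ a b Hab HC) as [mx [Hmx Hmxab]].
  exists (g (Rmax a (Rmin b mx))). split. { apply Hpos. apply clamp_in; auto. }
  intros x Hx. specialize (Hmx x Hx). rewrite (clamp_id a b x Hx) in Hmx. exact Hmx.
Qed.

Lemma ctw_sub (A B : R -> Prop) g x : (forall z, A z -> B z) -> ctw B g x -> ctw A g x.
Proof.
  intros HAB Hc e He. destruct (Hc e He) as [del [Hdel HP]]. exists del. split; auto.
Qed.

Section Hs2.
Variables (n : nat) (c d : nat -> R).
Hypothesis Hcd : forall j, (j < n)%nat -> c j < d j.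

Lemma bdd_Hbar g : (forall x, Hbar n c d x -> ctw (Hbar n c d) g x) ->
  exists M, forall x, Hbar n c d x -> Rabs (g x) <= M.
Proof.
  intros Hc.
  destruct (fin_bound n (fun i M => forall x, c i <= x <= d i -> Rabs (g x) <= M)) as [M HM].
  - intros i M M' HMM HQ x Hx. specialize (HQ x Hx). lra.
  - intros i Hi. apply bdd_interval. { specialize (Hcd i Hi). lra. }
    intros x Hx. apply ctw_sub with (Hbar n c d). { intros z Hz. exists i. auto. }
    apply Hc. exists i. auto.
  - exists M. intros x [i [Hi Hx]]. apply (HM i Hi x Hx).
Qed.

Lemma pos_Hbar g : (forall x, Hbar n c d x -> ctw (Hbar n c d) g x) ->
  (forall x, Hbar n c d x -> 0 < g x) ->
  exists m, 0 < m /\ forall x, Hbar n c d x -> m <= g x.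
Proof.
  intros Hc Hp.
  destruct (fin_pos n (fun i m => forall x, c i <= x <= d i -> m <= g x)) as [m [Hm HM]].
  - intros i m m' HMM HQ x Hx. specialize (HQ x Hx). lra.
  - intros i Hi. apply pos_interval. { specialize (Hcd i Hi). lra. }
    + intros x Hx. apply ctw_sub with (Hbar n c d). { intros z Hz. exists i. auto. }
      apply Hc. exists i. auto.
    + intros x Hx. apply Hp. exists i. auto.
  - exists m. split; auto. intros x [i [Hi Hx]]. apply (HM i Hi x Hx).
Qed.
End Hs2.

Lemma isd_ext (f : R -> R) (x l l' : R) : is_derive f x l -> l = l' -> is_derive f x l'.
Proof. intros H ->; exact H. Qed.

Lemma isd_mult (f g : R -> R) (x df dg : R) : is_derive f x df -> is_derive g x dg ->
  is_derive (fun t => f t * g t) x (df * g x + f x * dg).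
Proof. intros H1 H2. apply (is_derive_mult f g x df dg H1 H2). intros; apply Rmult_comm. Qed.

Lemma isd_comp (f g : R -> R) (x df dg : R) : is_derive f (g x) df -> is_derive g x dg ->
  is_derive (fun t => f (g t)) x (dg * df).
Proof. intros H1 H2. apply (is_derive_comp f g x df dg H1 H2). Qed.

Lemma isd_plus (f g : R -> R) (x df dg : R) : is_derive f x df -> is_derive g x dg ->
  is_derive (fun t => f t + g t) x (df + dg).
Proof. intros H1 H2. apply (is_derive_plus f g x df dg H1 H2). Qed.

Lemma isd_const (a x : R) : is_derive (fun _ => a) x 0.
Proof. apply (is_derive_const a x). Qed.

Definition lt_all (p : nat) (w : list nat) := List.Forall (fun j => (j < p)%nat) w.

Fixpoint T1 (theta : nat -> R -> R) (t1 : nat -> R -> R) (w : list nat) (y : R) : R :=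
  match w with nil => 1 | j :: w' => T1 theta t1 w' (theta j y) * t1 j y end.
Fixpoint T2 (theta : nat -> R -> R) (t1 t2 : nat -> R -> R) (w : list nat) (y : R) : R :=
  match w with nil => 0 | j :: w' =>
    T2 theta t1 t2 w' (theta j y) * (t1 j y * t1 j y) + T1 theta t1 w' (theta j y) * t2 j y end.
Fixpoint L1 (theta : nat -> R -> R) (t1 b b1 : nat -> R -> R) (w : list nat) (y : R) : R :=
  match w with nil => 0 | j :: w' => L1 theta t1 b b1 w' (theta j y) * t1 j y + b1 j y / b j y end.
Fixpoint L2 (theta : nat -> R -> R) (t1 t2 b b1 b2 : nat -> R -> R) (w : list nat) (y : R) : R :=
  match w with nil => 0 | j :: w' =>
    L2 theta t1 t2 b b1 b2 w' (theta j y) * (t1 j y * t1 j y)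
    + L1 theta t1 b b1 w' (theta j y) * t2 j y
    + (b2 j y / b j y - (b1 j y / b j y) * (b1 j y / b j y)) end.

Section Snoc.
Variables (theta t1 t2 : nat -> R -> R).
Lemma T_snoc u j y : theta_w theta (u ++ j :: nil) y = theta j (theta_w theta u y).
Proof. revert y; induction u; simpl; auto. Qed.
Lemma T1_snoc u j y : T1 theta t1 (u ++ j :: nil) y = t1 j (theta_w theta u y) * T1 theta t1 u y.
Proof. revert y; induction u; intros y; simpl. ring. rewrite IHu. ring. Qed.
Lemma T2_snoc u j y : T2 theta t1 t2 (u ++ j :: nil) y =
  t2 j (theta_w theta u y) * (T1 theta t1 u y * T1 theta t1 u y) + t1 j (theta_w theta u y) * T2 theta t1 t2 u y.
Proof. revert y; induction u; intros y; simpl. ring. rewrite IHu, T1_snoc. ring. Qed.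
Lemma T_app u v y : theta_w theta (u ++ v) y = theta_w theta v (theta_w theta u y).
Proof. revert y; induction u; simpl; auto. Qed.
End Snoc.

Section Deriv.
Variables (n : nat) (c d : nat -> R) (p : nat) (b theta : nat -> R -> R).
Let H := Hset n c d.
Let t1 j := Derive (theta j).
Let t2 j y := Derive_n (theta j) 2 y.
Let b1 j := Derive (b j).
Let b2 j y := Derive_n (b j) 2 y.
Hypothesis Hdt1 : forall j y, (j < p)%nat -> H y -> is_derive (theta j) y (t1 j y).
Hypothesis Hdt2 : forall j y, (j < p)%nat -> H y -> is_derive (t1 j) y (t2 j y).
Hypothesis Hdb1 : forall j y, (j < p)%nat -> H y -> is_derive (b j) y (b1 j y).
Hypothesis Hdb2 : forall j y, (j < p)%nat -> H y -> is_derive (b1 j) y (b2 j y).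
Hypothesis HthH : forall j y, (j < p)%nat -> H y -> H (theta j y).
Hypothesis Hbp : forall j y, (j < p)%nat -> H y -> 0 < b j y.

Lemma T_H w y : lt_all p w -> H y -> H (theta_w theta w y).
Proof. intros Hw; revert y; induction Hw; intros y Hy; simpl; auto. Qed.

Lemma T_deriv w y : lt_all p w -> H y ->
  is_derive (theta_w theta w) y (T1 theta t1 w y) /\ is_derive (T1 theta t1 w) y (T2 theta t1 t2 w y).
Proof.
  intros Hw; revert y; induction Hw as [|j w' Hj Hw' IH]; intros y Hy; simpl.
  - split. apply (is_derive_id y). apply isd_const.
  - destruct (IH (theta j y) (HthH j y Hj Hy)) as [I1 I2]. split.
    + eapply isd_ext. apply (isd_comp (theta_w theta w') (theta j)). exact I1.
      apply (Hdt1 j y Hj Hy). ring.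
    + eapply isd_ext. apply isd_mult. apply (isd_comp (T1 theta t1 w') (theta j)). exact I2.
      apply (Hdt1 j y Hj Hy). apply (Hdt2 j y Hj Hy). cbv beta. ring.
Qed.

Lemma bw_pos w y : lt_all p w -> H y -> 0 < b_w b theta w y.
Proof.
  intros Hw; revert y; induction Hw as [|j w' Hj Hw' IH]; intros y Hy; simpl. lra.
  apply Rmult_lt_0_compat; auto.
Qed.

Lemma bw_deriv w y : lt_all p w -> H y ->
  is_derive (b_w b theta w) y (b_w b theta w y * L1 theta t1 b b1 w y) /\
  is_derive (L1 theta t1 b b1 w) y (L2 theta t1 t2 b b1 b2 w y).
Proof.
  intros Hw; revert y; induction Hw as [|j w' Hj Hw' IH]; intros y Hy; simpl.
  - split; eapply isd_ext; try apply isd_const; ring.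
  - assert (Hty := HthH j y Hj Hy).
    destruct (IH (theta j y) Hty) as [I1 I2].
    assert (Hb0 := Hbp j y Hj Hy).
    split.
    + eapply isd_ext. apply isd_mult. apply (isd_comp (b_w b theta w')). exact I1.
      apply (Hdt1 j y Hj Hy). apply (Hdb1 j y Hj Hy). cbv beta. field. lra.
    + eapply isd_ext. apply isd_plus. apply isd_mult. apply (isd_comp (L1 theta t1 b b1 w')).
      exact I2. apply (Hdt1 j y Hj Hy). apply (Hdt2 j y Hj Hy).
      apply is_derive_div. apply (Hdb2 j y Hj Hy). apply (Hdb1 j y Hj Hy). lra.
      cbv beta. field. lra.
Qed.
Lemma F_deriv1 w s z : lt_all p w -> H z ->
  is_derive (fun t => Rpower (b_w b theta w t) s) z
    (s * L1 theta t1 b b1 w z * Rpower (b_w b theta w z) s).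
Proof.
  intros Hw Hz. destruct (bw_deriv w z Hw Hz) as [D1 _]. assert (P := bw_pos w z Hw Hz).
  unfold Rpower. eapply isd_ext.
  apply (isd_comp exp (fun t => s * ln (b_w b theta w t))). apply is_derive_exp.
  eapply isd_ext. apply (isd_mult (fun _ => s) (fun t => ln (b_w b theta w t))). apply isd_const.
  apply (isd_comp ln (b_w b theta w)). apply is_derive_ln. exact P. exact D1.
  reflexivity. field. lra.
Qed.

Lemma F_deriv2 w s y : lt_all p w -> H y ->
  Derive_n (fun t => Rpower (b_w b theta w t) s) 2 y =
  Rpower (b_w b theta w y) s * (s * L2 theta t1 t2 b b1 b2 w y + s ^ 2 * (L1 theta t1 b b1 w y) ^ 2).
Proof.
  intros Hw Hy. simpl. apply is_derive_unique.
  apply (is_derive_ext_loc (fun t => s * L1 theta t1 b b1 w t * Rpower (b_w b theta w t) s)).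
  - assert (HL := H_locally n c d y Hy). 
    apply (filter_imp (Hset n c d)); auto. intros t Ht. symmetry. apply is_derive_unique.
    apply F_deriv1; auto.
  - destruct (bw_deriv w y Hw Hy) as [_ D2].
    eapply isd_ext. apply isd_mult. apply isd_mult. apply isd_const. exact D2.
    apply F_deriv1; auto. cbv beta. ring.
Qed.
End Deriv.

Fixpoint psum (a : nat -> R) (N : nat) : R :=
  match N with O => 0 | S N' => psum a N' + a N' end.

Lemma psum_shift a N : psum a (S N) = a O + psum (fun i => a (S i)) N.
Proof. induction N; simpl in *. ring. rewrite IHN. ring. Qed.

Lemma psum_ext a b N : (forall i, (i < N)%nat -> a i = b i) -> psum a N = psum b N.
Proof. induction N; intros Hab; simpl; auto. rewrite IHN, Hab; auto. Qed.

Lemma psum_le a b N : (forall i, (i < N)%nat -> a i <= b i) -> psum a N <= psum b N.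
Proof. induction N; intros Hab; simpl. lra. assert (psum a N <= psum b N) by (apply IHN; auto). specialize (Hab N ltac:(lia)). lra. Qed.

Lemma psum_nonneg a N : (forall i, 0 <= a i) -> 0 <= psum a N.
Proof. intros Ha. induction N; simpl. lra. specialize (Ha N). lra. Qed.

Lemma psum_plus a b N : psum (fun i => a i + b i) N = psum a N + psum b N.
Proof. induction N; simpl. ring. rewrite IHN. ring. Qed.

Lemma psum_scal k a N : psum (fun i => k * a i) N = k * psum a N.
Proof. induction N; simpl. ring. rewrite IHN. ring. Qed.

Lemma psum_mono a N M : (forall i, 0 <= a i) -> (N <= M)%nat -> psum a N <= psum a M.
Proof.
  intros Ha HNM. induction HNM. lra. simpl. specialize (Ha m). lra.
Qed.

Lemma sq_le X e : Rabs X <= e -> X * X <= e ^ 2.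
Proof.
  intros HX. assert (0 <= Rabs X) by apply Rabs_pos.
  replace (X * X) with (Rabs X * Rabs X). nra.
  rewrite <- Rabs_mult. apply Rabs_right. apply Rle_ge. apply Rle_0_sqr.
Qed.

Section Bounds.
Variables (Hs : R -> Prop) (p : nat) (b theta t1 t2 b1 b2 : nat -> R -> R) (eps : nat -> R) (C1 C2 M0 : R).
Hypothesis He0 : forall k, 0 <= eps k.
Hypothesis HC1 : 0 <= C1.
Hypothesis HC2 : 0 <= C2.
Hypothesis HM0 : 0 <= M0.
Hypothesis HthH : forall j y, (j < p)%nat -> Hs y -> Hs (theta j y).
Hypothesis HT1 : forall w y, lt_all p w -> Hs y -> Rabs (T1 theta t1 w y) <= eps (length w).
Hypothesis Hb1 : forall j z, (j < p)%nat -> Hs z -> Rabs (b1 j z / b j z) <= C1.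
Hypothesis Hb2 : forall j z, (j < p)%nat -> Hs z -> Rabs (b2 j z / b j z) <= C2.
Hypothesis Ht2 : forall j z, (j < p)%nat -> Hs z -> Rabs (t2 j z) <= M0.

Lemma TH w y : lt_all p w -> Hs y -> Hs (theta_w theta w y).
Proof. intros Hw; revert y; induction Hw; intros y Hy; simpl; auto. Qed.

Lemma lt_all_snoc u j : lt_all p u -> (j < p)%nat -> lt_all p (u ++ j :: nil).
Proof. intros. apply Forall_app. split; auto. Qed.

Lemma T2_claim v : lt_all p v -> forall u y, lt_all p u -> Hs y ->
  Rabs (T2 theta t1 t2 (u ++ v) y) <=
  Rabs (T1 theta t1 v (theta_w theta u y)) * Rabs (T2 theta t1 t2 u y)
  + M0 * psum (fun i => eps (length u + i) ^ 2 * eps (length v - 1 - i)) (length v).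
Proof.
  intros Hv. induction Hv as [|j v' Hj Hv' IH]; intros u y Hu Hy.
  - rewrite app_nil_r. simpl. rewrite Rabs_R1. lra.
  - replace (u ++ j :: v') with ((u ++ j :: nil) ++ v') by (rewrite <- app_assoc; reflexivity).
    specialize (IH (u ++ j :: nil) y (lt_all_snoc u j Hu Hj) Hy).
    rewrite T_snoc, T2_snoc, length_app in IH. simpl length in IH.
    set (z := theta_w theta u y) in *.
    assert (Hz : Hs z) by (apply TH; auto).
    set (A := T1 theta t1 v' (theta j z)) in *.
    set (X := T1 theta t1 u y) in *. set (Y := T2 theta t1 t2 u y) in *.
    assert (HA : Rabs A <= eps (length v')) by (apply HT1; auto).
    assert (HX : Rabs X <= eps (length u)) by (apply HT1; auto).
    assert (Htt := Ht2 j z Hj Hz).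
    assert (Htri : Rabs (t2 j z * (X * X) + t1 j z * Y) <= Rabs (t2 j z) * (X * X) + Rabs (t1 j z) * Rabs Y).
    { eapply Rle_trans; [apply Rabs_triang|]. rewrite !Rabs_mult.
      replace (Rabs X * Rabs X) with (X * X). lra. rewrite <- Rabs_mult. symmetry. apply Rabs_right. apply Rle_ge, Rle_0_sqr. }
    assert (HXX := sq_le X _ HX).
    assert (0 <= X * X) by apply Rle_0_sqr.
    assert (0 <= Rabs A) by apply Rabs_pos. assert (0 <= Rabs (t2 j z)) by apply Rabs_pos.
    assert (0 <= Rabs Y) by apply Rabs_pos. assert (0 <= Rabs (t1 j z)) by apply Rabs_pos.
    assert (Hk1 : Rabs A * (Rabs (t2 j z) * (X * X)) <= eps (length v') * (M0 * eps (length u) ^ 2)).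
    { apply Rmult_le_compat; auto. apply Rmult_le_pos; auto. apply Rmult_le_compat; auto. }
    assert (Hsum : psum (fun i => eps (length u + i) ^ 2 * eps (length (j :: v') - 1 - i)) (length (j :: v'))
       = eps (length u) ^ 2 * eps (length v') + psum (fun i => eps (length u + 1 + i) ^ 2 * eps (length v' - 1 - i)) (length v')).
    { simpl length. rewrite psum_shift. f_equal. repeat (first [lia | f_equal]).
      apply psum_ext. intros i Hi. repeat (first [lia | f_equal]). }
    rewrite Hsum.
    assert (HT1v : T1 theta t1 (j :: v') z = A * t1 j z) by reflexivity.
    rewrite HT1v, Rabs_mult.
    eapply Rle_trans. exact IH.
    assert (Rabs A * Rabs (t2 j z * (X * X) + t1 j z * Y) <= Rabs A * (Rabs (t2 j z) * (X * X) + Rabs (t1 j z) * Rabs Y))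
      by (apply Rmult_le_compat_l; auto).
    nra.
Qed.

Definition beta k := M0 * psum (fun l => eps l ^ 2 * eps (k - 1 - l)) k.

Lemma T2_bound u y : lt_all p u -> Hs y -> Rabs (T2 theta t1 t2 u y) <= beta (length u).
Proof.
  intros Hu Hy. assert (Hc := T2_claim u Hu nil y (Forall_nil _) Hy). simpl in Hc.
  rewrite Rabs_R0, Rmult_0_r, Rplus_0_l in Hc. exact Hc.
Qed.

Lemma beta_nonneg k : 0 <= beta k.
Proof. unfold beta. apply Rmult_le_pos; auto. apply psum_nonneg. intros i. apply Rmult_le_pos; auto. apply pow_le; auto. Qed.

Lemma L1_claim v : lt_all p v -> forall u y, lt_all p u -> Hs y ->
  Rabs (L1 theta t1 b b1 v (theta_w theta u y) * T1 theta t1 u y) <= C1 * psum (fun i => eps (length u + i)) (length v).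
Proof.
  intros Hv. induction Hv as [|j v' Hj Hv' IH]; intros u y Hu Hy.
  - simpl. rewrite Rmult_0_l, Rabs_R0. lra.
  - specialize (IH (u ++ j :: nil) y (lt_all_snoc u j Hu Hj) Hy).
    rewrite T_snoc, T1_snoc, length_app in IH. simpl length in IH.
    set (z := theta_w theta u y) in *.
    assert (Hz : Hs z) by (apply TH; auto).
    set (X := T1 theta t1 u y) in *.
    assert (HX : Rabs X <= eps (length u)) by (apply HT1; auto).
    assert (Hbz := Hb1 j z Hj Hz).
    simpl L1. simpl length. rewrite psum_shift.
    replace (psum (fun i => eps (length u + S i)) (length v')) with
      (psum (fun i => eps (length u + 1 + i)) (length v')) by (apply psum_ext; intros; repeat (first [lia | f_equal])).
    replace (length u + 0)%nat with (length u) by lia.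
    replace ((L1 theta t1 b b1 v' (theta j z) * t1 j z + b1 j z / b j z) * X) with
      (L1 theta t1 b b1 v' (theta j z) * (t1 j z * X) + (b1 j z / b j z) * X) by ring.
    eapply Rle_trans; [apply Rabs_triang|]. rewrite (Rabs_mult (b1 j z / b j z)).
    assert (Rabs (b1 j z / b j z) * Rabs X <= C1 * eps (length u)).
    { apply Rmult_le_compat; auto; apply Rabs_pos. }
    lra.
Qed.

Lemma L2_claim v : lt_all p v -> forall u y, lt_all p u -> Hs y ->
  let z := theta_w theta u y in
  let X := T1 theta t1 u y in let Y := T2 theta t1 t2 u y in
  L2 theta t1 t2 b b1 b2 v z * (X * X) + L1 theta t1 b b1 v z * Y <=
    psum (fun i => C2 * eps (length u + i) ^ 2 + C1 * beta (length u + i)) (length v) /\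
  L2 theta t1 t2 b b1 b2 v z * (X * X) + L1 theta t1 b b1 v z * Y >=
    - psum (fun i => (C1 ^ 2 + C2) * eps (length u + i) ^ 2 + C1 * beta (length u + i)) (length v).
Proof.
  intros Hv. induction Hv as [|j v' Hj Hv' IH]; intros u y Hu Hy z X Y.
  - simpl. lra.
  - specialize (IH (u ++ j :: nil) y (lt_all_snoc u j Hu Hj) Hy).
    cbv zeta in IH.
    rewrite T_snoc, T1_snoc, T2_snoc, length_app in IH. simpl length in IH. fold z X Y in IH.
    assert (Hz : Hs z) by (apply TH; auto).
    assert (HX : Rabs X <= eps (length u)) by (apply HT1; auto).
    assert (HY : Rabs Y <= beta (length u)) by (apply T2_bound; auto).
    assert (Hbz1 := Hb1 j z Hj Hz). assert (Hbz2 := Hb2 j z Hj Hz).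
    set (q1 := b1 j z / b j z) in *. set (q2 := b2 j z / b j z) in *.
    assert (Heq : L2 theta t1 t2 b b1 b2 (j :: v') z * (X * X) + L1 theta t1 b b1 (j :: v') z * Y =
      (L2 theta t1 t2 b b1 b2 v' (theta j z) * ((t1 j z * X) * (t1 j z * X)) +
       L1 theta t1 b b1 v' (theta j z) * (t2 j z * (X * X) + t1 j z * Y)) +
      ((q2 - q1 * q1) * (X * X) + q1 * Y)).
    { simpl. unfold q1, q2. ring. }
    rewrite Heq. simpl length. rewrite !psum_shift.
    replace (length u + 0)%nat with (length u) by lia.
    replace (psum (fun i => C2 * eps (length u + S i) ^ 2 + C1 * beta (length u + S i)) (length v')) with
      (psum (fun i => C2 * eps (length u + 1 + i) ^ 2 + C1 * beta (length u + 1 + i)) (length v'))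
      by (apply psum_ext; intros; repeat (first [lia | f_equal])).
    replace (psum (fun i => (C1 ^ 2 + C2) * eps (length u + S i) ^ 2 + C1 * beta (length u + S i)) (length v')) with
      (psum (fun i => (C1 ^ 2 + C2) * eps (length u + 1 + i) ^ 2 + C1 * beta (length u + 1 + i)) (length v'))
      by (apply psum_ext; intros; repeat (first [lia | f_equal])).
    destruct IH as [IH1 IH2].
    assert (HXX := sq_le X _ HX). assert (HXX0 : 0 <= X * X) by apply Rle_0_sqr.
    assert (Hq1 : q1 * q1 <= C1 ^ 2) by (apply sq_le; auto).
    assert (Hq10 : 0 <= q1 * q1) by apply Rle_0_sqr.
    apply Rabs_le_between in Hbz2.
    assert (Hq1Y : Rabs (q1 * Y) <= C1 * beta (length u)).
    { rewrite Rabs_mult. apply Rmult_le_compat; auto; apply Rabs_pos. }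
    apply Rabs_le_between in Hq1Y.
    assert (Hup : (q2 - q1 * q1) * (X * X) <= C2 * eps (length u) ^ 2).
    { apply Rle_trans with (C2 * (X * X)). apply Rmult_le_compat_r; lra. apply Rmult_le_compat_l; lra. }
    assert (Hlo : (q2 - q1 * q1) * (X * X) >= - ((C1 ^ 2 + C2) * eps (length u) ^ 2)).
    { assert (0 <= C1 ^ 2) by (apply pow2_ge_0).
      assert (Hq : -(C1^2+C2) <= q2 - q1*q1) by lra.
      assert (h1: -(C1^2+C2) * (X*X) <= (q2-q1*q1)*(X*X)) by (apply Rmult_le_compat_r; lra).
      assert (h2: (C1^2+C2)*(X*X) <= (C1^2+C2)*eps (length u) ^2) by (apply Rmult_le_compat_l; lra).
      lra. }
    split; lra.
Qed.
End Bounds.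

Lemma conv_le a e N : (forall i, 0 <= a i) -> (forall i, 0 <= e i) ->
  psum (fun k => psum (fun l => a l * e (k - 1 - l)%nat) k) N <= psum a N * psum e N.
Proof.
  intros Ha He. revert a Ha. induction N as [|N IH]; intros a Ha.
  - simpl. lra.
  - rewrite psum_shift. simpl psum at 1. rewrite Rplus_0_l.
    rewrite (psum_ext _ (fun k => a O * e k + psum (fun l => a (S l) * e (k - 1 - l)%nat) k)).
    2:{ intros k Hk. rewrite psum_shift. f_equal. repeat (first [lia | f_equal]).
        apply psum_ext. intros l Hl. repeat (first [lia | f_equal]). }
    rewrite psum_plus, psum_scal.
    assert (IH' := IH (fun l => a (S l)) (fun l => Ha (S l))).
    rewrite (psum_shift a N).
    assert (psum e N <= psum e (S N)) by (simpl; specialize (He N); lra).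
    assert (0 <= psum e N) by (apply psum_nonneg; auto).
    assert (0 <= a O + psum (fun i => a (S i)) N).
    { specialize (Ha O) as Ha0. assert (0 <= psum (fun i => a (S i)) N) by (apply psum_nonneg; intros; apply Ha). lra. }
    assert ((a O + psum (fun i => a (S i)) N) * psum e N <= (a O + psum (fun i => a (S i)) N) * psum e (S N))
      by (apply Rmult_le_compat_l; auto).
    nra.
Qed.

Lemma psum_split a m N : psum a (m + N) = psum a m + psum (fun k => a (m + k)%nat) N.
Proof. induction N; simpl. rewrite Nat.add_0_r. ring. rewrite Nat.add_succ_r. simpl. rewrite IHN. ring. Qed.

Lemma sum_n_psum a N : sum_n a N = psum a (S N).
Proof. induction N. rewrite sum_O. simpl. rewrite Rplus_0_l. reflexivity. rewrite sum_Sn, IHN. simpl. reflexivity. Qed.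

Lemma series_geo (a : nat -> R) mu q : (forall k, 0 <= a k) -> (1 <= mu)%nat -> 0 <= q < 1 ->
  (forall k, a (k + mu)%nat <= q * a k) -> forall N, psum a N <= Series a.
Proof.
  intros Ha Hmu Hq Hrec.
  set (B := psum a mu / (1 - q)).
  assert (HB0 : 0 <= psum a mu) by (apply psum_nonneg; auto).
  assert (HB1 : psum a mu <= B).
  { unfold B. apply Rmult_le_reg_r with (1 - q). lra. unfold Rdiv. rewrite Rmult_assoc, Rinv_l by lra. nra. }
  assert (HB2 : psum a mu + q * B = B). { unfold B. field. lra. }
  assert (Hbd : forall N, psum a N <= B).
  { intros N. induction N as [N IH] using (well_founded_induction Nat.lt_wf_0).
    destruct (Compare_dec.le_lt_dec N mu) as [Hle|Hlt].
    - eapply Rle_trans; [apply psum_mono; eauto|]. auto.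
    - replace N with (mu + (N - mu))%nat by lia. rewrite psum_split.
      assert (psum (fun k => a (mu + k)%nat) (N - mu) <= q * psum a (N - mu)).
      { rewrite <- psum_scal. apply psum_le. intros i _. rewrite Nat.add_comm. apply Hrec. }
      assert (psum a (N - mu) <= B) by (apply IH; lia).
      nra. }
  assert (Hinc : forall N, sum_n a N <= sum_n a (S N)).
  { intros N. rewrite !sum_n_psum. simpl. specialize (Ha (S N)). lra. }
  assert (Hex : ex_finite_lim_seq (sum_n a)).
  { apply (ex_finite_lim_seq_incr _ B). auto. intros N. rewrite sum_n_psum. auto. }
  assert (Hlim := Lim_seq_correct' _ Hex).
  intros N. destruct N. simpl. unfold Series. 
  assert (H0 := is_lim_seq_incr_compare _ _ Hlim Hinc O). rewrite sum_n_psum in H0. simpl in H0.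
  specialize (Ha O). lra.
  assert (H0 := is_lim_seq_incr_compare _ _ Hlim Hinc N). rewrite sum_n_psum in H0. exact H0.
Qed.

Lemma deriv_lip f y l K : is_derive f y l ->
  (exists del, 0 < del /\ forall z, Rabs (z - y) < del -> Rabs (f z - f y) <= K * Rabs (z - y)) ->
  Rabs l <= K.
Proof.
  intros Hd [del [Hdel HL]]. apply is_derive_Reals in Hd.
  destruct (Rle_or_lt (Rabs l) K) as [|Hlt]; auto. exfalso.
  destruct (Hd (Rabs l - K) ltac:(lra)) as [[dl Hdl] Hp]. simpl in Hp.
  set (h := Rmin dl del / 2).
  assert (Hm : 0 < Rmin dl del) by (apply Rmin_glb_lt; auto).
  assert (Hh0 : 0 < h) by (unfold h; lra).
  assert (Hh1 : h < dl) by (unfold h; assert (Rmin dl del <= dl) by apply Rmin_l; lra).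
  assert (Hh2 : h < del) by (unfold h; assert (Rmin dl del <= del) by apply Rmin_r; lra).
  specialize (Hp h ltac:(lra)). rewrite Rabs_right in Hp by lra. specialize (Hp Hh1).
  specialize (HL (y + h)). replace (y + h - y) with h in HL by ring.
  rewrite Rabs_right in HL by lra. specialize (HL Hh2).
  assert (Hq : Rabs ((f (y + h) - f y) / h) <= K).
  { unfold Rdiv. rewrite Rabs_mult, Rabs_inv, (Rabs_right h) by lra.
    apply Rmult_le_reg_r with h; auto. rewrite Rmult_assoc, Rinv_l by lra. lra. }
  assert (Rabs l <= Rabs ((f (y + h) - f y) / h) + Rabs ((f (y + h) - f y) / h - l)).
  { replace l with ((f (y + h) - f y) / h - ((f (y + h) - f y) / h - l)) at 1 by ring.
    eapply Rle_trans; [apply Rabs_triang|]. rewrite Rabs_Ropp. lra. }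
  lra.
Qed.

Section Lip.
Variables (n : nat) (c d : nat -> R).
Hypothesis Hcd : forall j, (j < n)%nat -> c j < d j.
Hypothesis Hdisj : forall i j, (i < n)%nat -> (j < n)%nat -> i <> j -> d i < c j \/ d j < c i.

Lemma lip_single (f : R -> R) (D Th : R) :
  (forall z, Hset n c d z -> is_derive f z (Derive f z)) ->
  (forall z, Hset n c d z -> Rabs (Derive f z) <= D) ->
  (forall z, Hset n c d z -> Rabs (f z) <= Th) ->
  exists L, forall x y, Hset n c d x -> Hset n c d y -> Rabs (f x - f y) <= L * Rabs (x - y).
Proof.
  intros Hd HD HT.
  destruct (fin_bound n (fun i M => forall k, (k < n)%nat -> forall x y, c i < x < d i -> c k < y < d k ->
      Rabs (f x - f y) <= M * Rabs (x - y))) as [M HM].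
  - intros i M M' HMM HQ k Hk x y Hx Hy. specialize (HQ k Hk x y Hx Hy).
    assert (0 <= Rabs (x - y)) by apply Rabs_pos. nra.
  - intros i Hi.
    apply fin_bound.
    + intros k M M' HMM HQ x y Hx Hy. specialize (HQ x y Hx Hy).
      assert (0 <= Rabs (x - y)) by apply Rabs_pos. nra.
    + intros k Hk. destruct (Nat.eq_dec i k) as [<-|Hne].
      * exists D. intros x y Hx Hy.
        destruct (MVT_gen f y x (Derive f)) as [xi [Hxi Heq]].
        { intros z Hz. apply Hd. exists i. split; auto.
          assert (Rmin y x <= z <= Rmax y x) by lra.
          unfold Rmin, Rmax in *. destruct Rle_dec; lra. }
        { intros z Hz. apply continuity_pt_filterlim.
          apply (ex_derive_continuous (K := R_AbsRing) (V := R_NormedModule) f z).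
          eexists. apply Hd. exists i. split; auto.
          unfold Rmin, Rmax in *. destruct Rle_dec; lra. }
        rewrite Heq, Rabs_mult. apply Rmult_le_compat_r. apply Rabs_pos.
        apply HD. exists i. split; auto. unfold Rmin, Rmax in *. destruct Rle_dec; lra.
      * destruct (Hdisj i k Hi Hk Hne) as [Hg|Hg].
        -- exists (2 * Th / (c k - d i)). intros x y Hx Hy.
           assert (HTx := HT x ltac:(exists i; auto)). assert (HTy := HT y ltac:(exists k; auto)).
           assert (Hxy : c k - d i <= Rabs (x - y)) by (rewrite Rabs_minus_sym, Rabs_right; lra).
           assert (Hf : Rabs (f x - f y) <= 2 * Th).
           { unfold Rminus. eapply Rle_trans; [apply Rabs_triang|]. rewrite Rabs_Ropp. lra. }
           assert (0 <= Th) by (assert (0 <= Rabs (f x)) by apply Rabs_pos; lra).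
           eapply Rle_trans; [exact Hf|].
           apply Rle_trans with (2 * Th / (c k - d i) * (c k - d i)).
           right. field. lra. apply Rmult_le_compat_l; auto.
           apply Rdiv_le_0_compat; lra.
        -- exists (2 * Th / (c i - d k)). intros x y Hx Hy.
           assert (HTx := HT x ltac:(exists i; auto)). assert (HTy := HT y ltac:(exists k; auto)).
           assert (Hxy : c i - d k <= Rabs (x - y)) by (rewrite Rabs_right; lra).
           assert (Hf : Rabs (f x - f y) <= 2 * Th).
           { unfold Rminus. eapply Rle_trans; [apply Rabs_triang|]. rewrite Rabs_Ropp. lra. }
           assert (0 <= Th) by (assert (0 <= Rabs (f x)) by apply Rabs_pos; lra).
           eapply Rle_trans; [exact Hf|].
           apply Rle_trans with (2 * Th / (c i - d k) * (c i - d k)).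
           right. field. lra. apply Rmult_le_compat_l; auto.
           apply Rdiv_le_0_compat; lra.
  - exists M. intros x y [i [Hi Hx]] [k [Hk Hy]]. apply (HM i Hi k Hk x y Hx Hy).
Qed.
End Lip.

Lemma ctw_cont_within A g x : ctw A g x -> cont_within A g x.
Proof.
  intros Hc. unfold cont_within. apply filterlim_locally. intros [e He].
  destruct (Hc e He) as [del [Hdel HP]]. exists (mkposreal del Hdel).
  intros z Hz Az. apply ballR. apply HP; auto.
Qed.

Lemma ctw_mult A f g x : ctw A f x -> ctw A g x -> ctw A (fun z => f z * g z) x.
Proof.
  intros Hf Hg. apply cont_within_ctw. apply ctw_cont_within in Hf. apply ctw_cont_within in Hg.
  unfold cont_within in *.
  apply (filterlim_comp_2 (F := within A (locally x)) f g Rmult Hf Hg).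
  apply (filterlim_mult (K := R_AbsRing) (f x) (g x)).
Qed.

Lemma ctw_comp A f th x : ctw A th x -> (forall z, A z -> A (th z)) -> A x -> ctw A f (th x) ->
  ctw A (fun z => f (th z)) x.
Proof.
  intros Ht HA Ax Hf e He. destruct (Hf e He) as [d1 [Hd1 P1]].
  destruct (Ht d1 Hd1) as [d2 [Hd2 P2]]. exists d2. split; auto.
Qed.

Lemma ctw_cont_comp A k f x : continuity_pt k (f x) -> ctw A f x -> ctw A (fun z => k (f z)) x.
Proof.
  intros Hk Hf e He. unfold continuity_pt, continue_in, limit1_in, limit_in in Hk.
  destruct (Hk e He) as [d1 [Hd1 P1]]. destruct (Hf d1 Hd1) as [d2 [Hd2 P2]].
  exists d2. split; auto. intros z Az Hz.
  destruct (Req_dec (f z) (f x)) as [Heq|Hne].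
  - rewrite Heq. replace (k (f x) - k (f x)) with 0 by ring. rewrite Rabs_R0. lra.
  - apply (P1 (f z)). split. split. exact I. auto. simpl. unfold R_dist. apply P2; auto.
Qed.

Lemma ctw_const A a x : ctw A (fun _ => a) x.
Proof. intros e He. exists 1. split. lra. intros. replace (a - a) with 0 by ring. rewrite Rabs_R0. lra. Qed.

Lemma ctw_lin A g F x e a : ctw A g x -> ctw A F x -> ctw A (fun z => e * g z + a * F z) x.
Proof.
  intros Hg HF eps Heps.
  assert (He1 : 0 < Rabs e + 1) by (assert (0 <= Rabs e) by apply Rabs_pos; lra).
  assert (Ha1 : 0 < Rabs a + 1) by (assert (0 <= Rabs a) by apply Rabs_pos; lra).
  destruct (Hg (eps / 2 / (Rabs e + 1))) as [d1 [Hd1 P1]]. { apply Rdiv_lt_0_compat; lra. }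
  destruct (HF (eps / 2 / (Rabs a + 1))) as [d2 [Hd2 P2]]. { apply Rdiv_lt_0_compat; lra. }
  exists (Rmin d1 d2). split. apply Rmin_glb_lt; auto.
  intros z Az Hz.
  assert (Hz1 : Rabs (z - x) < d1) by (eapply Rlt_le_trans; [exact Hz| apply Rmin_l]).
  assert (Hz2 : Rabs (z - x) < d2) by (eapply Rlt_le_trans; [exact Hz| apply Rmin_r]).
  specialize (P1 z Az Hz1). specialize (P2 z Az Hz2).
  replace (e * g z + a * F z - (e * g x + a * F x)) with (e * (g z - g x) + a * (F z - F x)) by ring.
  eapply Rle_lt_trans; [apply Rabs_triang|]. rewrite !Rabs_mult.
  assert (Rabs e * Rabs (g z - g x) <= eps / 2).
  { apply Rle_trans with ((Rabs e + 1) * (eps / 2 / (Rabs e + 1))).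
    apply Rmult_le_compat; try apply Rabs_pos; lra. right; field; lra. }
  assert (Rabs a * Rabs (F z - F x) < eps / 2).
  { apply Rle_lt_trans with (Rabs a * (eps / 2 / (Rabs a + 1))).
    apply Rmult_le_compat_l; [apply Rabs_pos|lra].
    apply Rlt_le_trans with ((Rabs a + 1) * (eps / 2 / (Rabs a + 1))).
    apply Rmult_lt_compat_r. apply Rdiv_lt_0_compat; lra. lra. right; field; lra. }
  lra.
Qed.

Lemma ratio_le a M mm bb : 0 <= a <= M -> 0 < mm <= bb -> a / bb <= M / mm.
Proof.
  intros [Ha HaM] [Hm Hmb]. unfold Rdiv. apply Rmult_le_compat; auto.
  apply Rlt_le, Rinv_0_lt_compat; lra. apply Rinv_le_contravar; lra.
Qed.

Lemma Rabs_div_pos a bb : 0 < bb -> Rabs (a / bb) = Rabs a / bb.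
Proof. intros. unfold Rdiv. rewrite Rabs_mult, Rabs_inv, (Rabs_right bb) by lra. reflexivity. Qed.

Section Main.
Variables (n : nat) (c d : nat -> R) (p m : nat) (b theta : nat -> R -> R).
Hypothesis Hcd : forall j, (j < n)%nat -> c j < d j.
Hypothesis Hdisj : forall i j, (i < n)%nat -> (j < n)%nat -> i <> j -> d i < c j \/ d j < c i.
Hypothesis Hm : (2 <= m)%nat.
Hypothesis Hb : forall j, (j < p)%nat -> Cm_bar m (Hset n c d) (Hbar n c d) (b j).
Hypothesis Htheta : forall j, (j < p)%nat -> Cm_bar m (Hset n c d) (Hbar n c d) (theta j).
Hypothesis Hbpos : forall j x, (j < p)%nat -> Hbar n c d x -> 0 < b j x.
Hypothesis HthetaH : forall j x, (j < p)%nat -> Hset n c d x -> Hset n c d (theta j x).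

Lemma cm_deriv f : Cm_bar m (Hset n c d) (Hbar n c d) f -> forall y, Hset n c d y ->
  is_derive f y (Derive f y) /\ is_derive (Derive f) y (Derive_n f 2 y).
Proof.
  intros [Hd _] y Hy. split.
  - apply Derive_correct. exact (Hd y Hy 1%nat ltac:(lia)).
  - apply Derive_correct. exact (Hd y Hy 2%nat ltac:(lia)).
Qed.

Lemma cm_ctw f : Cm_bar m (Hset n c d) (Hbar n c d) f -> forall x, Hbar n c d x -> ctw (Hbar n c d) f x.
Proof. intros [_ [Hc _]] x Hx. apply cont_within_ctw. auto. Qed.

Lemma cm_bdd f k : Cm_bar m (Hset n c d) (Hbar n c d) f -> (k <= m)%nat ->
  exists M, forall z, Hset n c d z -> Rabs (Derive_n f k z) <= M.
Proof.
  intros [_ [_ He]] Hk. destruct (He k Hk) as [g [Hge Hgc]].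
  destruct (bdd_Hbar n c d Hcd g) as [M HM].
  { intros x Hx. apply cont_within_ctw. auto. }
  exists M. intros z Hz. rewrite <- Hge by auto. apply HM. apply H_sub; auto.
Qed.

Lemma b_ratio_bdd j k : (j < p)%nat -> (k <= m)%nat ->
  exists K, forall z, Hset n c d z -> Rabs (Derive_n (b j) k z) / b j z <= K.
Proof.
  intros Hj Hk. destruct (cm_bdd (b j) k (Hb j Hj) Hk) as [M HM].
  destruct (pos_Hbar n c d Hcd (b j)) as [m0 [Hm0 Hmb]].
  { apply cm_ctw; auto. } { intros; apply Hbpos; auto. }
  exists (M / m0). intros z Hz. apply ratio_le. split. apply Rabs_pos. auto.
  split; auto. apply Hmb. apply H_sub; auto.
Qed.

Lemma b_ratio_all k : (k <= m)%nat ->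
  exists K, forall j z, (j < p)%nat -> Hset n c d z -> Rabs (Derive_n (b j) k z) / b j z <= K.
Proof.
  intros Hk. destruct (fin_bound p (fun j K => forall z, Hset n c d z -> Rabs (Derive_n (b j) k z) / b j z <= K)) as [K HK].
  - intros j M M' HMM HQ z Hz. specialize (HQ z Hz). lra.
  - intros j Hj. apply b_ratio_bdd; auto.
  - exists K. intros j z Hj Hz. apply HK; auto.
Qed.

Lemma C1_ub j z : (j < p)%nat -> Hset n c d z -> Rabs (Derive (b j) z / b j z) <= Cb1 p n c d b.
Proof.
  intros Hj Hz. destruct (b_ratio_all 1 ltac:(lia)) as [K HK].
  assert (Hp := Hbpos j z Hj (H_sub n c d z Hz)).
  rewrite Rabs_div_pos by auto. unfold Cb1. apply supR_ub with K.
  - intros r [j' [x [Hj' [Hx ->]]]]. apply (HK j' x Hj' Hx).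
  - exists j, z. auto.
Qed.

Lemma C2_ub j z : (j < p)%nat -> Hset n c d z -> Rabs (Derive_n (b j) 2 z / b j z) <= Cb2 p n c d b.
Proof.
  intros Hj Hz. destruct (b_ratio_all 2 ltac:(lia)) as [K HK].
  assert (Hp := Hbpos j z Hj (H_sub n c d z Hz)).
  rewrite Rabs_div_pos by auto. unfold Cb2. apply supR_ub with K.
  - intros r [j' [x [Hj' [Hx ->]]]]. apply (HK j' x Hj' Hx).
  - exists j, z. auto.
Qed.

Lemma C1_nonneg : 0 <= Cb1 p n c d b.
Proof.
  unfold Cb1. apply supR_nonneg. intros r [j [x [Hj [Hx ->]]]].
  assert (Hp := Hbpos j x Hj (H_sub n c d x Hx)). apply Rdiv_le_0_compat; [apply Rabs_pos|auto].
Qed.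

Lemma C2_nonneg : 0 <= Cb2 p n c d b.
Proof.
  unfold Cb2. apply supR_nonneg. intros r [j [x [Hj [Hx ->]]]].
  assert (Hp := Hbpos j x Hj (H_sub n c d x Hx)). apply Rdiv_le_0_compat; [apply Rabs_pos|auto].
Qed.

Lemma M0_nonneg : 0 <= Mth0 p n c d theta.
Proof. unfold Mth0. apply supR_nonneg. intros r [j [x [g [_ [_ [_ ->]]]]]]. apply Rabs_pos. Qed.

Lemma M0_ub j z : (j < p)%nat -> Hset n c d z -> Rabs (Derive_n (theta j) 2 z) <= Mth0 p n c d theta.
Proof.
  intros Hj Hz.
  destruct (fin_bound p (fun j K => forall z, Hset n c d z -> Rabs (Derive_n (theta j) 2 z) <= K)) as [K HK].
  - intros j' M M' HMM HQ z' Hz'. specialize (HQ z' Hz'). lra.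
  - intros j' Hj'. apply cm_bdd; auto.
  - destruct (Htheta j Hj) as [_ [_ He]]. destruct (He 2%nat Hm) as [g0 [Hg0e Hg0c]].
    rewrite <- (Hg0e z Hz). unfold Mth0. apply supR_ub with K.
    + intros r [j' [x [g [Hj' [Hx [[Hge Hgc] ->]]]]]].
      apply (closure_abs n c d Hcd g x K); auto. apply cont_within_ctw; auto.
      intros z' Hz'. rewrite Hge by auto. apply HK; auto.
    + exists j, z, g0. split; auto. split. apply H_sub; auto. split; auto. split; auto.
Qed.

Lemma letter_lip : exists L, 0 <= L /\ forall j x y, (j < p)%nat -> Hset n c d x -> Hset n c d y ->
  Rabs (theta j x - theta j y) <= L * Rabs (x - y).
Proof.
  destruct (fin_bound p (fun j L => forall x y, Hset n c d x -> Hset n c d y ->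
    Rabs (theta j x - theta j y) <= L * Rabs (x - y))) as [L HL].
  - intros j M M' HMM HQ x y Hx Hy. specialize (HQ x y Hx Hy). assert (0 <= Rabs (x - y)) by apply Rabs_pos. nra.
  - intros j Hj. destruct (cm_bdd (theta j) 1 (Htheta j Hj) ltac:(lia)) as [D HD].
    destruct (cm_bdd (theta j) 0 (Htheta j Hj) ltac:(lia)) as [Th HT].
    apply (lip_single n c d Hdisj (theta j) D Th).
    + intros z Hz. apply (cm_deriv _ (Htheta j Hj) z Hz).
    + exact HD.
    + exact HT.
  - exists (Rmax L 0). split. apply Rmax_r. intros j x y Hj Hx Hy.
    eapply Rle_trans. apply HL; auto. apply Rmult_le_compat_r. apply Rabs_pos. apply Rmax_l.
Qed.

Lemma word_lip L : 0 <= L -> (forall j x y, (j < p)%nat -> Hset n c d x -> Hset n c d y ->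
  Rabs (theta j x - theta j y) <= L * Rabs (x - y)) ->
  forall w, lt_all p w -> forall x y, Hset n c d x -> Hset n c d y ->
  Rabs (theta_w theta w x - theta_w theta w y) <= L ^ length w * Rabs (x - y).
Proof.
  intros HL0 HL w Hw. induction Hw as [|j w' Hj Hw' IH]; intros x y Hx Hy; simpl.
  - lra.
  - eapply Rle_trans. apply IH; apply HthetaH; auto.
    assert (0 <= L ^ length w') by (apply pow_le; auto).
    rewrite (Rmult_comm L), Rmult_assoc. apply Rmult_le_compat_l; auto.
Qed.

Let E := eps p n c d theta.

Lemma eps_nonneg k : 0 <= E k.
Proof.
  unfold E, eps. destruct k. lra. apply supR_nonneg.
  intros r [w [x [y [_ [_ [_ [Hxy ->]]]]]]]. unfold Rdiv. apply Rmult_le_pos. apply Rabs_pos.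
  apply Rlt_le, Rinv_0_lt_compat, Rabs_pos_lt. lra.
Qed.

Lemma eps_ub w x y : lt_all p w -> Hset n c d x -> Hset n c d y ->
  Rabs (theta_w theta w x - theta_w theta w y) <= E (length w) * Rabs (x - y).
Proof.
  intros Hw Hx Hy. destruct w as [|j w'].
  - simpl. unfold E, eps. lra.
  - destruct (Req_dec x y) as [<-|Hxy].
    + replace (theta_w theta (j :: w') x - theta_w theta (j :: w') x) with 0 by ring.
      replace (x - x) with 0 by ring. rewrite Rabs_R0. lra.
    + destruct letter_lip as [L [HL0 HL]].
      assert (Hpos : 0 < Rabs (x - y)) by (apply Rabs_pos_lt; lra).
      assert (Hr : Rabs (theta_w theta (j :: w') x - theta_w theta (j :: w') y) / Rabs (x - y) <= E (length (j :: w'))).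
      { unfold E, eps. simpl length. apply supR_ub with (L ^ S (length w')).
        - intros r [w2 [x2 [y2 [[Hl Hw2] [Hx2 [Hy2 [Hxy2 ->]]]]]]].
          assert (Hp2 : 0 < Rabs (x2 - y2)) by (apply Rabs_pos_lt; lra).
          apply Rmult_le_reg_r with (Rabs (x2 - y2)); auto. unfold Rdiv. rewrite Rmult_assoc, Rinv_l by lra.
          rewrite Rmult_1_r. rewrite <- Hl. apply word_lip; auto.
        - exists (j :: w'), x, y. split. split; auto. auto. }
      apply Rmult_le_reg_r with (/ Rabs (x - y)). apply Rinv_0_lt_compat; auto.
      rewrite Rmult_assoc, Rinv_r by lra. rewrite Rmult_1_r. exact Hr.
Qed.

Lemma Hdt1 : forall j y, (j < p)%nat -> Hset n c d y -> is_derive (theta j) y (Derive (theta j) y).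
Proof. intros j y Hj Hy. apply (cm_deriv _ (Htheta j Hj) y Hy). Qed.
Lemma Hdt2 : forall j y, (j < p)%nat -> Hset n c d y -> is_derive (Derive (theta j)) y (Derive_n (theta j) 2 y).
Proof. intros j y Hj Hy. apply (cm_deriv _ (Htheta j Hj) y Hy). Qed.
Lemma Hdb1 : forall j y, (j < p)%nat -> Hset n c d y -> is_derive (b j) y (Derive (b j) y).
Proof. intros j y Hj Hy. apply (cm_deriv _ (Hb j Hj) y Hy). Qed.
Lemma Hdb2 : forall j y, (j < p)%nat -> Hset n c d y -> is_derive (Derive (b j)) y (Derive_n (b j) 2 y).
Proof. intros j y Hj Hy. apply (cm_deriv _ (Hb j Hj) y Hy). Qed.
Lemma HbpH : forall j y, (j < p)%nat -> Hset n c d y -> 0 < b j y.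
Proof. intros j y Hj Hy. apply Hbpos; auto. apply H_sub; auto. Qed.

Lemma T1_bound w y : lt_all p w -> Hset n c d y ->
  Rabs (T1 theta (fun j => Derive (theta j)) w y) <= E (length w).
Proof.
  intros Hw Hy. destruct (T_deriv n c d p theta Hdt1 Hdt2 HthetaH w y Hw Hy) as [D1 _].
  apply (deriv_lip _ y _ _ D1). destruct (H_open n c d y Hy) as [del [Hdel HP]].
  exists del. split; auto. intros z Hz. apply eps_ub; auto.
Qed.

Lemma eps_rec mu kappa : (1 <= mu)%nat -> 
  (forall w x y, word p mu w -> Hbar n c d x -> Hbar n c d y ->
       Rabs (theta_w theta w x - theta_w theta w y) <= kappa * Rabs (x - y)) ->
  forall k, E (k + mu) <= Rmax kappa 0 * E k.
Proof.
  intros Hmu Hc k.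
  assert (HK0 : 0 <= Rmax kappa 0 * E k) by (apply Rmult_le_pos; [apply Rmax_r|apply eps_nonneg]).
  destruct (k + mu)%nat as [|q] eqn:Hkq. lia.
  unfold E at 1, eps. apply supR_le; auto.
  intros r [w [x [y [[Hl Hw] [Hx [Hy [Hxy ->]]]]]]].
  assert (Hpos : 0 < Rabs (x - y)) by (apply Rabs_pos_lt; lra).
  apply Rmult_le_reg_r with (Rabs (x - y)); auto. unfold Rdiv. rewrite Rmult_assoc, Rinv_l by lra.
  rewrite Rmult_1_r.
  rewrite <- (firstn_skipn k w) in Hw |- *. apply Forall_app in Hw. destruct Hw as [Hu Hv].
  rewrite !T_app.
  assert (Hlu : length (firstn k w) = k) by (apply firstn_length_le; lia).
  assert (Hlv : length (skipn k w) = mu) by (rewrite length_skipn; lia).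
  eapply Rle_trans. apply Hc. split; auto. apply H_sub; apply (T_H n c d p theta HthetaH); auto. apply H_sub; apply (T_H n c d p theta HthetaH); auto.
  eapply Rle_trans. apply Rmult_le_compat_r. apply Rabs_pos. apply (Rmax_l kappa 0).
  rewrite Rmult_assoc. apply Rmult_le_compat_l. apply Rmax_r.
  replace (E k) with (E (length (firstn k w))) by (rewrite Hlu; reflexivity). apply eps_ub; auto.
Qed.

Lemma thetaHbar j x : (j < p)%nat -> Hbar n c d x -> Hbar n c d (theta j x).
Proof.
  intros Hj Hx. apply (maps_Hbar n c d Hcd (theta j)); auto.
  - intros z Hz. apply cm_ctw; auto.
Qed.

Lemma bw_Hbar w : lt_all p w -> forall x, Hbar n c d x -> 0 < b_w b theta w x /\ ctw (Hbar n c d) (b_w b theta w) x.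
Proof.
  intros Hw. induction Hw as [|j w' Hj Hw' IH]; intros x Hx; simpl.
  - split. lra. apply ctw_const.
  - destruct (IH (theta j x) (thetaHbar j x Hj Hx)) as [P1 C1].
    split. apply Rmult_lt_0_compat; auto.
    apply (ctw_mult _ (fun y => b_w b theta w' (theta j y)) (b j)).
    + apply ctw_comp; auto. apply cm_ctw; auto. intros; apply thetaHbar; auto.
    + apply cm_ctw; auto.
Qed.

Lemma F_ctw w s x : lt_all p w -> Hbar n c d x -> ctw (Hbar n c d) (fun z => Rpower (b_w b theta w z) s) x.
Proof.
  intros Hw Hx. destruct (bw_Hbar w Hw x Hx) as [P C].
  apply (ctw_cont_comp _ (fun u => Rpower u s) (b_w b theta w)); auto.
  apply continuity_pt_filterlim.
  apply (ex_derive_continuous (K := R_AbsRing) (V := R_NormedModule) (fun u => Rpower u s)).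
  eexists. unfold Rpower.
  apply (isd_comp exp (fun t => s * ln t)). apply is_derive_exp.
  apply (isd_mult (fun _ => s) ln). apply isd_const. apply is_derive_ln. exact P.
Qed.

Lemma pointwise s w y : 0 < s -> lt_all p w -> Hset n c d y ->
  (forall N, psum E N <= Series E) -> (forall N, psum (fun k => E k ^ 2) N <= Series (fun k => E k ^ 2)) ->
  let K1 := Cb1 p n c d b in let K2 := Cb2 p n c d b in let M := Mth0 p n c d theta in
  let S1 := Series E in let S2 := Series (fun k => E k ^ 2) in
  Derive_n (fun t => Rpower (b_w b theta w t) s) 2 y <=
    (s ^ 2 * K1 ^ 2 * S1 ^ 2 + s * S2 * (K2 + K1 * M * S1)) * Rpower (b_w b theta w y) s /\
  Derive_n (fun t => Rpower (b_w b theta w t) s) 2 y >=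
    - (s * S2 * (K1 ^ 2 + K2 + K1 * M * S1)) * Rpower (b_w b theta w y) s.
Proof.
  intros Hs Hw Hy HS1 HS2 K1 K2 M S1 S2.
  rewrite (F_deriv2 n c d p b theta Hdt1 Hdt2 Hdb1 Hdb2 HthetaH HbpH w s y Hw Hy).
  assert (HF : 0 < Rpower (b_w b theta w y) s) by (unfold Rpower; apply exp_pos).
  set (Fy := Rpower (b_w b theta w y) s) in *.
  assert (HC1 := C1_nonneg). assert (HC2 := C2_nonneg). assert (HM0 := M0_nonneg).
  fold K1 K2 M in HC1, HC2, HM0.
  assert (HT1 := T1_bound).
  assert (Hb1' : forall j z, (j < p)%nat -> Hset n c d z -> Rabs (Derive (b j) z / b j z) <= K1) by (intros; apply C1_ub; auto).
  assert (Hb2' : forall j z, (j < p)%nat -> Hset n c d z -> Rabs (Derive_n (b j) 2 z / b j z) <= K2) by (intros; apply C2_ub; auto).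
  assert (Ht2' : forall j z, (j < p)%nat -> Hset n c d z -> Rabs (Derive_n (theta j) 2 z) <= M) by (intros; apply M0_ub; auto).
  assert (HL1 := L1_claim (Hset n c d) p b theta (fun j => Derive (theta j)) (fun j => Derive (b j)) E K1
     HthetaH HT1 Hb1' w Hw nil y (Forall_nil _) Hy).
  assert (HL2 := L2_claim (Hset n c d) p b theta (fun j => Derive (theta j)) (fun j y => Derive_n (theta j) 2 y)
     (fun j => Derive (b j)) (fun j y => Derive_n (b j) 2 y) E K1 K2 M HC2
     HthetaH HT1 Hb1' Hb2' Ht2' w Hw nil y (Forall_nil _) Hy).
  cbv zeta in HL2. cbn [theta_w T1 T2 length Nat.add] in HL1, HL2.
  set (A := L1 theta (fun j => Derive (theta j)) b (fun j => Derive (b j)) w y) in *.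
  set (Bv := L2 theta (fun j => Derive (theta j)) (fun j y => Derive_n (theta j) 2 y) b (fun j => Derive (b j))
        (fun j y => Derive_n (b j) 2 y) w y) in *.
  rewrite Rmult_1_r in HL1. rewrite Rmult_1_r, Rmult_0_r, Rplus_0_r in HL2.
  rewrite psum_plus, psum_scal, psum_scal in HL2.
  set (N := length w) in *.
  assert (HE0 : forall i, 0 <= E i) by apply eps_nonneg.
  assert (HpE : psum E N <= S1) by apply HS1.
  assert (HpE2 : psum (fun k => E k ^ 2) N <= S2) by apply HS2.
  assert (HpE0 : 0 <= psum E N) by (apply psum_nonneg; auto).
  assert (HpE20 : 0 <= psum (fun k => E k ^ 2) N) by (apply psum_nonneg; intros; apply pow2_ge_0).
  assert (Hbeta : psum (beta E M) N <= M * (S2 * S1)).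
  { unfold beta. rewrite psum_scal. apply Rmult_le_compat_l; auto.
    eapply Rle_trans. apply (conv_le (fun l => E l ^ 2) E N); auto. intros; apply pow2_ge_0.
    apply Rmult_le_compat; auto. }
  assert (Hbeta0 : 0 <= psum (beta E M) N) by (apply psum_nonneg; intros; apply beta_nonneg; auto).
  destruct HL2 as [HU HLo]. rewrite psum_plus, !psum_scal in HLo.
  assert (HA : Rabs A <= K1 * S1).
  { eapply Rle_trans. exact HL1. apply Rmult_le_compat_l; auto. }
  assert (HAA := sq_le A _ HA). assert (HAA0 : 0 <= A * A) by apply Rle_0_sqr.
  assert (HBu : Bv <= K2 * S2 + K1 * (M * (S2 * S1))).
  { assert (K2 * psum (fun k => E k ^ 2) N <= K2 * S2) by (apply Rmult_le_compat_l; auto).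
    assert (K1 * psum (beta E M) N <= K1 * (M * (S2 * S1))) by (apply Rmult_le_compat_l; auto).
    lra. }
  assert (HBl : Bv >= - ((K1 ^ 2 + K2) * S2 + K1 * (M * (S2 * S1)))).
  { assert (0 <= K1 ^ 2) by apply pow2_ge_0.
    assert ((K1 ^ 2 + K2) * psum (fun k => E k ^ 2) N <= (K1 ^ 2 + K2) * S2) by (apply Rmult_le_compat_l; lra).
    assert (K1 * psum (beta E M) N <= K1 * (M * (S2 * S1))) by (apply Rmult_le_compat_l; auto).
    lra. }
  assert (Hs2 : 0 < s ^ 2) by (apply pow_lt; auto).
  split.
  - rewrite (Rmult_comm _ Fy). apply Rmult_le_compat_l. lra.
    assert (s * Bv <= s * (K2 * S2 + K1 * (M * (S2 * S1)))) by (apply Rmult_le_compat_l; lra).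
    assert (s ^ 2 * A ^ 2 <= s ^ 2 * (K1 * S1) ^ 2).
    { apply Rmult_le_compat_l. lra. replace (A ^ 2) with (A * A) by ring. auto. }
    replace (s ^ 2 * K1 ^ 2 * S1 ^ 2 + s * S2 * (K2 + K1 * M * S1)) with
      (s * (K2 * S2 + K1 * (M * (S2 * S1))) + s ^ 2 * (K1 * S1) ^ 2) by ring.
    lra.
  - rewrite (Rmult_comm _ Fy). apply Rle_ge. apply Rmult_le_compat_l. lra.
    assert (s * Bv >= s * - ((K1 ^ 2 + K2) * S2 + K1 * (M * (S2 * S1)))).
    { apply Rle_ge. apply Rmult_le_compat_l; lra. }
    assert (0 <= s ^ 2 * A ^ 2) by (apply Rmult_le_pos; [lra| apply pow2_ge_0]).
    replace (- (s * S2 * (K1 ^ 2 + K2 + K1 * M * S1))) with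
      (s * - ((K1 ^ 2 + K2) * S2 + K1 * (M * (S2 * S1)))) by ring.
    lra.
Qed.

Lemma main_sec (Hcontr : exists (mu : nat) (kappa : R), (1 <= mu)%nat /\ kappa < 1 /\
     forall w x y, word p mu w -> Hbar n c d x -> Hbar n c d y ->
       Rabs (theta_w theta w x - theta_w theta w y) <= kappa * Rabs (x - y)) :
  let K1 := Cb1 p n c d b in
  let K2 := Cb2 p n c d b in
  let M := Mth0 p n c d theta in
  let S1 := Series (eps p n c d theta) in
  let S2 := Series (fun k => (eps p n c d theta k) ^ 2) in
  forall (s : R), 0 < s ->
  forall (nu : nat) (w : list nat), (1 <= nu)%nat -> word p nu w ->
  forall (g : R -> R),
    cont_ext (Hset n c d) (Hbar n c d)
      (Derive_n (fun y => Rpower (b_w b theta w y) s) 2) g ->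
  forall x, Hbar n c d x ->
    g x / Rpower (b_w b theta w x) s
      <= s ^ 2 * K1 ^ 2 * S1 ^ 2 + s * S2 * (K2 + K1 * M * S1) /\
    g x / Rpower (b_w b theta w x) s
      >= - (s * S2 * (K1 ^ 2 + K2 + K1 * M * S1)).
Proof.
  intros K1 K2 M S1 S2 s Hs nu w Hnu [Hl Hw] g [Hge Hgc] x Hx.
  destruct Hcontr as [mu [kappa [Hmu [Hk Hc]]]].
  assert (Hq : 0 <= Rmax kappa 0 < 1).
  { split. apply Rmax_r. unfold Rmax. destruct Rle_dec; lra. }
  assert (HS1 : forall N, psum E N <= Series E).
  { apply (series_geo E mu (Rmax kappa 0)); auto. apply eps_nonneg. apply eps_rec; auto. }
  assert (HS2 : forall N, psum (fun k => E k ^ 2) N <= Series (fun k => E k ^ 2)).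
  { apply (series_geo _ mu (Rmax kappa 0 ^ 2)); auto. intros; apply pow2_ge_0.
    split. apply pow2_ge_0. assert (Rmax kappa 0 ^ 2 <= Rmax kappa 0 * 1) by (simpl; apply Rmult_le_compat_l; lra). lra.
    intros k. assert (H1 := eps_rec mu kappa Hmu Hc k). assert (H2 := eps_nonneg (k + mu)).
    assert (H3 := eps_nonneg k).
    replace (Rmax kappa 0 ^ 2 * E k ^ 2) with ((Rmax kappa 0 * E k) ^ 2) by ring.
    apply pow_incr. lra. }
  assert (HF : forall z, 0 < Rpower (b_w b theta w z) s) by (intros; unfold Rpower; apply exp_pos).
  assert (Hpw := fun y Hy => pointwise s w y Hs Hw Hy HS1 HS2).
  set (U := s ^ 2 * K1 ^ 2 * S1 ^ 2 + s * S2 * (K2 + K1 * M * S1)) in *.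
  set (V := s * S2 * (K1 ^ 2 + K2 + K1 * M * S1)) in *.
  assert (Hgx : ctw (Hbar n c d) g x) by (apply cont_within_ctw; auto).
  assert (HFx := F_ctw w s x Hw Hx).
  set (F := fun z => Rpower (b_w b theta w z) s) in *.
  assert (Hup : 1 * g x + (- U) * F x <= 0).
  { apply (closure_le n c d Hcd (fun z => 1 * g z + (- U) * F z) x 0); auto.
    apply ctw_lin; auto. intros z Hz. rewrite Hge by auto. destruct (Hpw z Hz) as [P _].
    unfold F, U, V, K1, K2, M, S1, S2 in *; unfold E in *; lra. }
  assert (Hlo : (-1) * g x + (- V) * F x <= 0).
  { apply (closure_le n c d Hcd (fun z => (-1) * g z + (- V) * F z) x 0); auto.
    apply ctw_lin; auto. intros z Hz. rewrite Hge by auto. destruct (Hpw z Hz) as [_ P].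
    unfold F, U, V, K1, K2, M, S1, S2 in *; unfold E in *; lra. }
  assert (HFx0 : 0 < F x) by apply HF.
  change (Rpower (b_w b theta w x) s) with (F x).
  split.
  - apply Rmult_le_reg_r with (F x); auto. unfold Rdiv. rewrite Rmult_assoc, Rinv_l by lra. lra.
  - apply Rle_ge. apply Rmult_le_reg_r with (F x); auto. unfold Rdiv. rewrite Rmult_assoc, Rinv_l by lra. lra.
Qed.
End Main.

Theorem lemma6p3 (n : nat) (c d : nat -> R) (p m : nat)
  (b theta : nat -> R -> R)
  (Hcd : forall j, (j < n)%nat -> c j < d j)
  (Hdisj : forall i j, (i < n)%nat -> (j < n)%nat -> i <> j -> d i < c j \/ d j < c i)
  (Hm : (2 <= m)%nat)
  (Hb : forall j, (j < p)%nat -> Cm_bar m (Hset n c d) (Hbar n c d) (b j))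
  (Htheta : forall j, (j < p)%nat -> Cm_bar m (Hset n c d) (Hbar n c d) (theta j))
  (Hbpos : forall j x, (j < p)%nat -> Hbar n c d x -> 0 < b j x)
  (HthetaH : forall j x, (j < p)%nat -> Hset n c d x -> Hset n c d (theta j x))
  (Hcontr : exists (mu : nat) (kappa : R), (1 <= mu)%nat /\ kappa < 1 /\
     forall w x y, word p mu w -> Hbar n c d x -> Hbar n c d y ->
       Rabs (theta_w theta w x - theta_w theta w y) <= kappa * Rabs (x - y)) :
  let K1 := Cb1 p n c d b in
  let K2 := Cb2 p n c d b in
  let M := Mth0 p n c d theta in
  let S1 := Series (eps p n c d theta) in
  let S2 := Series (fun k => (eps p n c d theta k) ^ 2) in
  forall (s : R), 0 < s ->
  forall (nu : nat) (w : list nat), (1 <= nu)%nat -> word p nu w ->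
  forall (g : R -> R),
    cont_ext (Hset n c d) (Hbar n c d)
      (Derive_n (fun y => Rpower (b_w b theta w y) s) 2) g ->
  forall x, Hbar n c d x ->
    g x / Rpower (b_w b theta w x) s
      <= s ^ 2 * K1 ^ 2 * S1 ^ 2 + s * S2 * (K2 + K1 * M * S1) /\
    g x / Rpower (b_w b theta w x) s
      >= - (s * S2 * (K1 ^ 2 + K2 + K1 * M * S1)).
Proof.
  exact (main_sec n c d p m b theta Hcd Hdisj Hm Hb Htheta Hbpos HthetaH Hcontr).
Qed.
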